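(* Let $n\geq 2$. There is a nonempty Zariski open subset $U\subset\mathbb{R}^n$ such that for every $v\in U$, we have $\max_H|H\cap S_nv|=(n-1)!$, where $H$ ranges over all hyperplanes in $\mathbb{R}^n$ (through the origin).
   Context: The symmetric group $S_n$ acts on $\mathbb{R}^n$ by permuting coordinates; $S_nv$ denotes the orbit of $v$. *)

(* Defs.v *)
From HB Require Import structures.
From mathcomp Require Import all_boot all_order all_algebra all_fingroup.
From mathcomp Require Import reals.
From mathcomp Require Import mpoly.
Set Implicit Arguments. Unset Strict Implicit. Unset Printing Implicit Defensive.
Import Order.TTheory GRing.Theory Num.Theory.
Local Open Scope ring_scope.

Notation vecR R n := {ffun 'I_n -> R}.

Definition permv (R : Type) (n : nat) (s : {perm 'I_n}) (v : {ffun 'I_n -> R})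
  : {ffun 'I_n -> R} := [ffun i => v (s i)].

(* The orbit S_n v, as a list (possibly with repetitions). *)
Definition orbit_seq (R : Type) (n : nat) (v : {ffun 'I_n -> R}) :=
  [seq permv s v | s : {perm 'I_n}].

Definition in_hyperplane (R : ringType) (n : nat) (a x : {ffun 'I_n -> R}) : bool :=
  \sum_(i < n) a i * x i == 0.

Definition hyp_orbit_card (R : ringType) (n : nat) (a v : {ffun 'I_n -> R}) : nat :=
  size (undup [seq w <- orbit_seq v | in_hyperplane a w]).

(* Zariski open subsets of R^n: complements of common zero sets of a
   family S of polynomials in n variables. *)
Definition zariski_open (R : ringType) (n : nat) (U : {ffun 'I_n -> R} -> Prop) : Prop :=
  exists S : {mpoly R[n]} -> Prop,
    forall v, U v <-> exists p, S p /\ p.@[v] != 0.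

(* Main.v *)
Require Import Defs.
From HB Require Import structures.
From mathcomp Require Import all_boot all_order all_algebra all_fingroup.
From mathcomp Require Import reals.
From mathcomp Require Import mpoly.
From mathcomp Require Import zify.
Import Order.TTheory GRing.Theory Num.Theory.
Local Open Scope ring_scope.

Module Aux.
Set Implicit Arguments. Unset Strict Implicit. Unset Printing Implicit Defensive.


Section Basics.
Variable n : nat.

Definition ltset m : {set 'I_n} := [set i : 'I_n | (i < m)%N].
Definition FixS m : {set {perm 'I_n}} := [set s : {perm 'I_n} | perm_on (ltset m) s].

Lemma card_ltset m : (m <= n)%N -> #|ltset m| = m.
Proof.
move=> hm.
have -> : ltset m = [set widen_ord hm i | i in [set: 'I_m]].
  apply/setP => i; rewrite !inE; apply/idP/imsetP => [lim|[j _ ->]] //.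
    by exists (Ordinal lim) => //; apply/val_inj.
  by rewrite /= ltn_ord.
rewrite card_imset ?cardsT ?card_ord // => i j /(congr1 val) /= h.
by apply/val_inj.
Qed.

Lemma card_FixS m : (m <= n)%N -> #|FixS m| = m`!.
Proof. by move=> hm; rewrite /FixS cardsE card_perm card_ltset. Qed.

Lemma FixS_closed m (s : {perm 'I_n}) (x : 'I_n) : s \in FixS m -> (s x < m)%N = (x < m)%N.
Proof. by rewrite inE => /perm_closed => h; have := h x; rewrite !inE. Qed.

Lemma FixS_out m (s : {perm 'I_n}) (x : 'I_n) : s \in FixS m -> (m <= x)%N -> s x = x.
Proof. by rewrite inE => /out_perm h hx; apply: h; rewrite inE -leqNgt. Qed.

Lemma FixS_intro m (s : {perm 'I_n}) : (forall x : 'I_n, (m <= x)%N -> s x = x) -> s \in FixS m.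
Proof.
move=> h; rewrite inE; apply/subsetP => x; rewrite !inE; apply: contraR.
by rewrite -leqNgt => /h ->; rewrite eqxx.
Qed.

Lemma FixS_all (s : {perm 'I_n}) : s \in FixS n.
Proof. by apply: FixS_intro => x; rewrite leqNgt ltn_ord. Qed.

End Basics.


Section Good.
Variable R : realType.
Variable n : nat.

Definition lsum m (b v : 'I_n -> R) (s : {perm 'I_n}) :=
  \sum_(j : 'I_n | (j < m)%N) b j * v (s j).
Definition nonconst m (b : 'I_n -> R) :=
  exists i j : 'I_n, [/\ (i < m)%N, (j < m)%N & b i != b j].
Definition Good m (v : 'I_n -> R) := forall b c, nonconst m b ->
  (#|[set s in FixS n m | lsum m b v s == c]| <= m.-1`!)%N.

Lemma Good1 v : Good 1 v.
Proof.
move=> b c [i [j [hi hj]]]; suff -> : i = j by rewrite eqxx.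
by apply: ord_inj; move: hi hj; rewrite !ltnS !leqn0 => /eqP -> /eqP ->.
Qed.

Lemma transfer_Fix m (im p0 : 'I_n) (s : {perm 'I_n}) :
  val im = m -> (p0 < m.+1)%N -> s \in FixS n m.+1 -> s p0 = im ->
  (tperm p0 im * s)%g \in FixS n m.
Proof.
move=> him hp0 hs hsp; apply: FixS_intro => x hx; rewrite permM.
case: tpermP => [e|e|/eqP hxp /eqP hxi] //.
- rewrite e in hx; have e' : p0 = im.
    by apply/val_inj; rewrite /= him; lia.
  by rewrite e -{1}e' hsp e'.
- by rewrite e hsp.
- rewrite (FixS_out hs) //; rewrite ltn_neqAle hx andbT; apply: contra hxi.
  by rewrite -him => /eqP h; apply/eqP/val_inj.
Qed.

Lemma transfer_sum m (im p0 : 'I_n) (s : {perm 'I_n}) (beta u : 'I_n -> R) :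
  val im = m -> (p0 < m.+1)%N ->
  lsum m (fun j => beta (tperm p0 im j)) u (tperm p0 im * s)%g =
  \sum_(j : 'I_n | (j < m.+1)%N && (j != p0)) beta j * u (s j).
Proof.
move=> him hp0; have him' : (im : nat) = m by [].
rewrite /lsum [RHS](reindex_inj (can_inj (tpermK p0 im))) /=.
apply: eq_big => j; last by move=> _; rewrite permM.
have vne : forall a b : 'I_n, (a != b) = (val a != val b) by [].
case: tpermP => [->|->|/eqP hjp /eqP hji].
- rewrite vne him; case: (eqVneq p0 im) => [e|hpi].
    by rewrite e him him' ltnn eqxx andbF.
  move: hpi; rewrite vne him => hpi; rewrite eq_sym hpi him' ltnSn /=.
  by rewrite ltn_neqAle hpi -ltnS hp0.
- by rewrite eqxx andbF him' ltnn.
- rewrite hjp andbT.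
  have hjm : (j : nat) != m by rewrite -him -vne.
  by rewrite ltnS [(j <= m)%N]leq_eqVlt (negbTE hjm).
Qed.

End Good.


Section Deg.
Variable R : realType.
Variable n : nat.

Definition Vp (v : 'I_n -> R) (im : 'I_n) (k : 'I_n) : {poly R} :=
  if k == im then 'X else (v k)%:P.

Lemma coef_rel m (im : 'I_n) (v : 'I_n -> R) (s : {perm 'I_n})
   (b : 'I_n -> {poly R}) (c : {poly R}) K (p : 'I_n) :
  (p < m.+1)%N -> s p = im ->
  (forall j : 'I_n, (j < m.+1)%N -> (size (b j) <= K.+1)%N) ->
  \sum_(j : 'I_n | (j < m.+1)%N) b j * Vp v im (s j) = c ->
  (b p)`_K = c`_K.+1 /\
  \sum_(j : 'I_n | (j < m.+1)%N && (j != p)) (b j)`_K * v (s j) =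
     c`_K - ((b p) * 'X)`_K.
Proof.
move=> hp hsp hsz hrel.
have e : c = b p * 'X + \sum_(j : 'I_n | (j < m.+1)%N && (j != p)) b j * (v (s j))%:P.
  rewrite -hrel (bigD1 p) //=; congr (_ * _ + _); first by rewrite /Vp hsp eqxx.
  apply: eq_bigr => j /andP [_ hjp]; rewrite /Vp; case: eqP => // h.
  by move: hjp; rewrite -(inj_eq (@perm_inj _ s)) hsp h eqxx.
have ce : forall i, c`_i = ((b p) * 'X)`_i +
    \sum_(j : 'I_n | (j < m.+1)%N && (j != p)) (b j)`_i * v (s j).
  by move=> i; rewrite e coefD coef_sum; congr (_ + _); apply: eq_bigr => j _; rewrite coefMC.
split.
  rewrite ce coefMX /= big1 ?addr0 // => j /andP [hj _].
  by rewrite nth_default ?mul0r // hsz.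
by rewrite ce addrC addKr.
Qed.


Lemma card_split (T : {set {perm 'I_n}}) m (im : 'I_n) :
  T \subset FixS n m.+1 -> (im < m.+1)%N ->
  #|T| = \sum_(p0 : 'I_n | (p0 < m.+1)%N) #|[set s in T | s p0 == im]|.
Proof.
move=> HT him.
rewrite -sum1_card.
transitivity (\sum_(s in T) \sum_(p0 : 'I_n | (p0 < m.+1)%N) ((s p0 == im) : nat)).
  apply: eq_bigr => s sT.
  rewrite (bigD1 ((s^-1)%g im)) /=; last first.
    by rewrite -(FixS_closed _ (subsetP HT _ sT)) permKV.
  rewrite permKV eqxx big1 // => j /andP [_ hj].
  by rewrite -(inj_eq (@perm_inj _ s)) permKV in hj; rewrite (negbTE hj).
rewrite exchange_big /=; apply: eq_bigr => p0 _.
rewrite -sum1dep_card big_mkcondr /=.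
by apply: eq_bigr => s _; case: (s p0 == im).
Qed.


Lemma Tp_inj_card (im p0 : 'I_n) (X Y : {set {perm 'I_n}}) :
  (forall s, s \in X -> (tperm p0 im * s)%g \in Y) -> (#|X| <= #|Y|)%N.
Proof.
move=> h; rewrite -(card_imset X (mulgI (tperm p0 im))).
by apply: subset_leq_card; apply/subsetP => x /imsetP [s sX ->]; apply: h.
Qed.

Lemma tperm_lt m (im p0 i : 'I_n) : val im = m -> (p0 < m.+1)%N ->
  (i < m.+1)%N -> i != p0 -> (tperm p0 im i < m)%N.
Proof.
move=> him hp0 hi hip; have him' : (im : nat) = m by [].
case: tpermP => [e|e|/eqP h1 /eqP h2].
- by rewrite e eqxx in hip.
- have : p0 != im by rewrite -e eq_sym.
  move: hp0; rewrite -him' => hp0 /eqP hne.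
  have : (p0 : nat) != im by apply/eqP => h; apply: hne; apply/val_inj.
  by move: hp0; rewrite ltnS leq_eqVlt => /orP [->|].
- have : (i : nat) != im by apply/eqP => h; move/eqP: h2; apply; apply/val_inj.
  by move: hi; rewrite -him' ltnS leq_eqVlt => /orP [->|].
Qed.

Lemma deg_core m (hm : (0 < m)%N) (hmn : (m < n)%N) (im : 'I_n) (him : val im = m)
  (v : 'I_n -> R) (Hg : Good m v) (T : {set {perm 'I_n}})
  (HT : T \subset FixS n m.+1) (b : 'I_n -> {poly R}) (c : {poly R})
  (i0 : 'I_n) (hi0 : (i0 < m.+1)%N) (hb0 : b i0 = 0)
  (hbnz : exists2 j : 'I_n, (j < m.+1)%N & b j != 0)
  (Hrel : forall s, s \in T ->
     \sum_(j : 'I_n | (j < m.+1)%N) b j * Vp v im (s j) = c) :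
  (#|T| <= m`!)%N.
Proof.
have him' : (im : nat) = m by [].
pose P := fun j : 'I_n => (j < m.+1)%N.
pose K := (\max_(j | P j) size (b j)).-1.
case: hbnz => jn Pjn bjn.
have maxpos : (0 < \max_(j | P j) size (b j))%N.
  apply: leq_trans (leq_bigmax_cond _ Pjn); by rewrite size_poly_gt0.
have hsz : forall j, P j -> (size (b j) <= K.+1)%N.
  by move=> j Pj; rewrite /K prednK //; apply: leq_bigmax_cond.
have [jm Pjm hmax] : {jm : 'I_n | jm \in P & \max_(j in P) size (b j) = size (b jm)}.
  by apply: eq_bigmax_cond; apply/card_gt0P; exists i0.
pose beta := fun j => (b j)`_K.
have bjm : beta jm != 0.
  have szjm : size (b jm) = K.+1 by rewrite /K prednK // -hmax.
  rewrite /beta -[K]/(K.+1.-1) -szjm -lead_coefE lead_coef_eq0 -size_poly_gt0 szjm //.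
have beta0 : beta i0 = 0 by rewrite /beta hb0 coef0.
pose gamma := c`_K.+1.
have Pim : P im by rewrite /P him'.
have pP : forall s p0, s \in T -> s p0 = im -> P p0.
  by move=> s p0 sT hs; rewrite /P -(FixS_closed _ (subsetP HT _ sT)) hs.
have rel := fun s p0 (sT : s \in T) (hs : s p0 = im) =>
   coef_rel (pP s p0 sT hs) hs hsz (Hrel s sT).
pose Tp := fun p0 : 'I_n => [set s in T | s p0 == im].
have HTp : forall p0, beta p0 != gamma -> Tp p0 = set0.
  move=> p0 hne; apply/setP => s; rewrite !inE.
  apply/negbTE; apply/negP => /andP [sT /eqP hs].
  by case: (rel s p0 sT hs) => h _; move: hne; rewrite /beta /gamma h eqxx.
have Tp_le : forall p0, P p0 -> (#|Tp p0| <= m`!)%N.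
  move=> p0 Pp0; rewrite -(card_FixS (ltnW hmn)).
  apply: (@Tp_inj_card im p0) => s; rewrite inE => /andP [sT /eqP hs].
  exact: transfer_Fix him Pp0 (subsetP HT _ sT) hs.
have hcard := card_split HT Pim.
case: (boolP [exists p0, [&& P p0, beta p0 == gamma &
   [forall i, forall j, (P i && P j && (i != p0) && (j != p0)) ==> (beta i == beta j)]]]).
  case/existsP => p0 /and3P [Pp0 /eqP bp0 /forallP hc].
  apply: leq_trans (Tp_le p0 Pp0); apply: subset_leq_card; apply/subsetP => s sT.
  rewrite inE sT /=; apply/negPn/negP => hne.
  pose q := (s^-1)%g im.
  have sq : s q = im by rewrite permKV.
  have Pq := pP s q sT sq.
  have hqp : q != p0 by apply: contra hne => /eqP <-; rewrite sq.
  have bq : beta q = gamma by case: (rel s q sT sq).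
  have allc : forall i, P i -> beta i = beta p0.
    move=> i Pi; case: (eqVneq i p0) => [->//|hip].
    rewrite bp0 -bq; apply/eqP; move: (hc i) => /forallP /(_ q).
    by rewrite Pi Pq hip hqp.
  by move: bjm; rewrite (allc jm Pjm) -(allc i0 hi0) beta0 eqxx.
rewrite negb_exists => /forallP hnA.
have Tp_le2 : forall p0, P p0 ->
    (#|Tp p0| <= (if beta p0 == gamma then m.-1`! else 0))%N.
  move=> p0 Pp0; case: eqP => hb; last by rewrite HTp ?cards0 //; apply/eqP.
  move: (hnA p0); rewrite Pp0 hb eqxx /= negb_forall => /existsP [i].
  rewrite negb_forall => /existsP [j]; rewrite negb_imply => /andP [].
  case/andP => /andP [/andP [Pi Pj] hip] hjp hij.
  pose b2 := fun j => beta (tperm p0 im j).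
  pose c2 := c`_K - ((b p0) * 'X)`_K.
  have nc : nonconst m b2.
    exists (tperm p0 im i), (tperm p0 im j); split.
    - exact: tperm_lt him Pp0 Pi hip.
    - exact: tperm_lt him Pp0 Pj hjp.
    - by rewrite /b2 !tpermK.
  apply: leq_trans (Hg b2 c2 nc).
  apply: (@Tp_inj_card im p0) => s; rewrite inE => /andP [sT /eqP hs].
  rewrite inE (transfer_Fix him Pp0 (subsetP HT _ sT) hs) /=.
  rewrite /b2 transfer_sum //; apply/eqP.
  by case: (rel s p0 sT hs).
rewrite hcard.
apply: (@leq_trans (\sum_(p0 : 'I_n | P p0) (if beta p0 == gamma then m.-1`! else 0))).
  by apply: leq_sum => p0 Pp0; apply: Tp_le2.
rewrite -big_mkcondr sum_nat_cond_const.
have [q Pq bq] : exists2 q, P q & beta q != gamma.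
  case: (eqVneq (beta i0) gamma) => h; last by exists i0.
  by exists jm => //; rewrite -h beta0.
have cle : (#|[set p0 | P p0 && (beta p0 == gamma)]| <= m)%N.
  have : (#|ltset n m.+1 :\ q| = m)%N.
    have := cardsD1 q (ltset n m.+1); rewrite card_ltset // inE.
    by rewrite /P in Pq; rewrite Pq add1n => -[].
  move=> <-; apply: subset_leq_card; apply/subsetP => x; rewrite !inE.
  case/andP => Px /eqP bx; rewrite (Px : (x < m.+1)%N) andbT; apply: contra bq => /eqP <-.
  by rewrite bx.
have fm : forall k, (0 < k)%N -> k`! = (k * k.-1`!)%N by case.
by rewrite (fm m hm) leq_mul2r cle orbT.
Qed.

End Deg.


Lemma frac_decomp (R : idomainType) (x : {fraction R}) :
  exists pq : R * R, pq.2 != 0 /\ x * tofrac pq.2 = tofrac pq.1.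
Proof.
elim/quotW: x => r.
exists ((frac r).1, (frac r).2); split; first exact: denom_ratioP.
unlock tofrac.
rewrite /= !piE.
apply/eqmodP; rewrite /= FracField.equivfE /FracField.mulf.
rewrite !numden_Ratio ?mulf_neq0 ?oner_eq0 ?denom_ratioP //.
by rewrite !mulr1 mulrC.
Qed.

Section Mat.
Variable n : nat.
Local Notation N := #|{perm 'I_n}|.

Definition Amat (F : pzRingType) (k : nat) (i0 : 'I_n) (V : 'I_n -> F)
   (T : {set {perm 'I_n}}) : 'M[F]_(n, N + n) :=
 \matrix_(j, r) match split r with
   | inl r1 => if enum_val r1 \in T then
                 (if j == i0 then -1 else if (j < k)%N then V (enum_val r1 j) else 0)
               else 0
   | inr r2 => if (r2 == j) && (k <= j)%N then 1 else 0
   end.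

Lemma Amat_l (F : pzRingType) k (i0 : 'I_n) (V : 'I_n -> F) T (w : 'rV[F]_n) s :
  (i0 < k)%N ->
  (w *m Amat k i0 V T) 0 (lshift n (enum_rank s)) =
  if s \in T then
    \sum_(j : 'I_n | (j < k)%N) (if j == i0 then 0 else w 0 j) * V (s j) - w 0 i0
  else 0.
Proof.
move=> hi0; rewrite mxE.
under eq_bigr => j _ do rewrite mxE (unsplitK (inl _)) enum_rankK.
case: (s \in T); last by rewrite big1 // => j _; rewrite mulr0.
rewrite (bigD1 i0) //= eqxx mulrN1 addrC; congr (_ + _).
rewrite [RHS](bigD1 i0) //=; rewrite ifT ?mul0r ?add0r //.
rewrite [LHS]big_mkcond [RHS]big_mkcond /=; apply: eq_bigr => j _.
case: (eqVneq j i0) => [->|hj]; first by rewrite ?eqxx ?andbF.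
by rewrite /= andbT; case: (j < k)%N; rewrite ?mulr0.
Qed.

Lemma Amat_r (F : pzRingType) k (i0 : 'I_n) (V : 'I_n -> F) T (w : 'rV[F]_n) (j : 'I_n) :
  (w *m Amat k i0 V T) 0 (rshift N j) = if (k <= j)%N then w 0 j else 0.
Proof.
rewrite mxE.
under eq_bigr => i _ do rewrite mxE (unsplitK (inr _)).
rewrite (bigD1 j) //= eqxx /= big1 ?addr0 => [|i hij].
  by case: (k <= j)%N; rewrite ?mulr1 ?mulr0.
by rewrite eq_sym (negbTE hij) mulr0.
Qed.

Lemma Amat_ker (F : pzRingType) k (i0 : 'I_n) (V : 'I_n -> F) T (w : 'rV[F]_n) :
  (i0 < k)%N ->
  (w *m Amat k i0 V T == 0) =
  [forall j : 'I_n, (k <= j)%N ==> (w 0 j == 0)] &&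
  [forall s in T, \sum_(j : 'I_n | (j < k)%N) (if j == i0 then 0 else w 0 j) * V (s j)
                    == w 0 i0].
Proof.
move=> hi0; apply/eqP/andP => [/matrixP h|[/forallP h1 /forallP h2]].
  split; apply/forallP.
    move=> j; apply/implyP => hj; move: (h 0 (rshift N j)).
    by rewrite Amat_r hj mxE => ->.
  move=> s; apply/implyP => sT; move: (h 0 (lshift n (enum_rank s))).
  by rewrite Amat_l // sT mxE => /eqP; rewrite subr_eq0.
apply/matrixP => i r; rewrite [i]ord1 [RHS]mxE.
case: (splitP r) => [r1 e|r2 e].
  have -> : r = lshift n (enum_rank (enum_val r1)) by apply/val_inj; rewrite /= enum_valK.
  rewrite Amat_l //; case: ifP => // sT.
  by move: (h2 (enum_val r1)); rewrite sT /= => /eqP ->; rewrite subrr.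
have -> : r = rshift N r2 by apply/val_inj.
rewrite Amat_r; case: ifP => // hj.
by move: (h1 r2); rewrite hj => /eqP.
Qed.

End Mat.


Section Formal.
Variable R : realType.
Variable n : nat.
Local Notation N := #|{perm 'I_n}|.

Lemma formal_minor m (hm : (0 < m)%N) (hmn : (m < n)%N) (im : 'I_n) (him : val im = m)
  (v : 'I_n -> R) (Hg : Good m v) (T : {set {perm 'I_n}})
  (HT : T \subset FixS n m.+1) (hT : (m`! < #|T|)%N) (i0 : 'I_n) (hi0 : (i0 < m.+1)%N) :
  exists f : 'I_n -> 'I_(N + n),
    \det (colsub f (Amat m.+1 i0 (Vp v im) T)) != 0.
Proof.
set A := Amat m.+1 i0 (Vp v im) T.
pose AF := map_mx (@tofrac {poly R}) A.
case: (boolP (row_full AF^T)) => hB.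
  exists (fullrankfun hB).
  have := fullrowsub_unit hB.
  rewrite unitmxE unitfE.
  have -> : rowsub (fullrankfun hB) AF^T = (map_mx (@tofrac _) (colsub (fullrankfun hB) A))^T.
    by apply/matrixP => i j; rewrite !mxE.
  by rewrite det_tr det_map_mx tofrac_eq0.
exfalso.
have rk : (\rank AF < n)%N.
  by rewrite -mxrank_tr ltn_neqAle hB rank_leq_col.
have kz : kermx AF != 0.
  apply/eqP => h; have := mxrank_ker AF; rewrite h mxrank0 => /esym/eqP.
  by rewrite subn_eq0 leqNgt rk.
have [i zi] : exists i, row i (kermx AF) != 0.
  case: (pickP (fun i => row i (kermx AF) != 0)) => [i hi|h]; first by exists i.
  move: kz; rewrite -[kermx AF]/(kermx AF) => /eqP []; apply/row_matrixP => i.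
  by rewrite row0; move: (h i) => /negbFE/eqP.
pose z := row i (kermx AF).
have zi' : z != 0 := zi.
have zA : z *m AF = 0 by rewrite -row_mul mulmx_ker row0.
clearbody z; clear zi.
have [pq hpq] := fin_all_exists (fun j => frac_decomp (z 0 j)).
pose d := \prod_j (pq j).2.
pose w := \row_j ((pq j).1 * \prod_(k | k != j) (pq k).2).
have wz : map_mx (@tofrac _) w = tofrac d *: z.
  apply/matrixP => a j; rewrite [a]ord1 !mxE /d [in RHS](bigD1 j) //=.
  rewrite !tofracM -(proj2 (hpq j)) /=.
  by rewrite [RHS]mulrC mulrA.
have dnz : d != 0 by apply/prodf_neq0 => j _; exact: (proj1 (hpq j)).
have wA : w *m A = 0.
  have h : map_mx (@tofrac _) (w *m A) = 0.
    by rewrite map_mxM wz -scalemxAl zA scaler0.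
  apply/matrixP => a b; move/matrixP: h => /(_ a b); rewrite !mxE => /eqP.
  by rewrite tofrac_eq0 => /eqP.
have wnz : w != 0.
  have [j zj] : exists j, z 0 j != 0.
    case: (pickP (fun j => z 0 j != 0)) => [j hj|h]; first by exists j.
    suff e : z = 0 by move: zi'; rewrite e => /eqP hh; exfalso; apply: hh.
    apply/matrixP => a j; rewrite [a]ord1 mxE.
    by move: (h j) => /negbFE/eqP.
  have hwj : tofrac (w 0 j) = tofrac d * z 0 j.
    by move/matrixP: wz => /(_ 0 j); rewrite [LHS]mxE [RHS]mxE.
  apply/negP => /eqP w0; move: hwj; rewrite w0 mxE tofrac0 => /esym/eqP.
  by rewrite mulf_eq0 tofrac_eq0 (negbTE dnz) (negbTE zj).
move: (eqxx (w *m A)); rewrite {2}wA Amat_ker // => /andP [/forallP hout /forallP hrel].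
pose b := fun j : 'I_n => if j == i0 then 0 else w 0 j.
have hrel' : forall s, s \in T ->
    \sum_(j : 'I_n | (j < m.+1)%N) b j * Vp v im (s j) = w 0 i0.
  by move=> s sT; move: (hrel s); rewrite sT => /eqP.
have hbnz : exists2 j : 'I_n, (j < m.+1)%N & b j != 0.
  case: (boolP [exists j : 'I_n, ((j < m.+1)%N) && (b j != 0)]).
    by case/existsP => j /andP [hj bj]; exists j.
  rewrite negb_exists => /forallP hb.
  have hb' : forall j : 'I_n, (j < m.+1)%N -> b j = 0.
    by move=> j hj; move: (hb j); rewrite hj /= => /negPn/eqP.
  have [s sT] : exists s, s \in T.
    by apply/card_gt0P; apply: leq_ltn_trans hT.
  have c0 : w 0 i0 = 0.
    by rewrite -(hrel' s sT) big1 // => j hj; rewrite hb' ?mul0r.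
  suff e : w = 0 by move: wnz; rewrite e => /eqP hh; exfalso; apply: hh.
  apply/matrixP => a j.
  rewrite [a]ord1 [RHS]mxE; case: (ltnP j m.+1) => hj.
    case: (eqVneq j i0) => [->|hji]; first by rewrite c0.
    by move: (hb' j hj); rewrite /b (negbTE hji).
  by move: (hout j); rewrite hj => /eqP.
have hb0 : b i0 = 0 by rewrite /b eqxx.
have := @deg_core R n m hm hmn im him v Hg T HT b (w 0 i0) i0 hi0 hb0 hbnz hrel'.
by rewrite leqNgt hT.
Qed.

End Formal.


Lemma poly_nonroot (R : numDomainType) (Q : {poly R}) : Q != 0 -> exists t, Q.[t] != 0.
Proof.
move=> hQ; case: (boolP [forall i : 'I_(size Q), Q.[i%:R] == 0]).
  move/forallP => h; exfalso.
  pose rs := [seq (val i)%:R | i <- enum 'I_(size Q)] : seq R.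
  have hall : all (root Q) rs by apply/allP => x /mapP [i _ ->]; exact: (h i).
  have hu : uniq rs.
    rewrite map_inj_uniq ?enum_uniq // => i j /eqP; rewrite eqr_nat => /eqP h1.
    exact: val_inj.
  by have := max_poly_roots hQ hall hu; rewrite size_map size_enum_ord ltnn.
by rewrite negb_forall => /existsP [i hi]; exists (val i)%:R.
Qed.

Lemma colsub_mul (F : pzRingType) k p q (f : 'I_q -> 'I_p) (w : 'rV[F]_k) (A : 'M[F]_(k, p)) :
  w *m colsub f A = colsub f (w *m A).
Proof. by apply/matrixP => i j; rewrite !mxE; apply: eq_bigr => l _; rewrite mxE. Qed.

Lemma reindex_Fix (R : nzRingType) n m (s : {perm 'I_n}) (F : 'I_n -> R) :
  s \in FixS n m -> \sum_(j : 'I_n | (j < m)%N) F (s j) = \sum_(k : 'I_n | (k < m)%N) F k.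
Proof.
move=> hs; rewrite [RHS](reindex_inj (@perm_inj _ s)) /=.
by apply: eq_bigl => j; rewrite (FixS_closed _ hs).
Qed.

Section Step.
Variable R : realType.
Variable n : nat.
Local Notation N := #|{perm 'I_n}|.

Definition Inv k (v : 'I_n -> R) :=
  [/\ Good k v, (forall i j : 'I_n, (i < k)%N -> (j < k)%N -> v i = v j -> i = j)
    & \sum_(i : 'I_n | (i < k)%N) v i != 0].

Lemma Inv1 : (0 < n)%N -> exists v, Inv 1 v.
Proof.
move=> hn; exists (fun _ => 1); split; first exact: Good1.
  move=> i j hi hj _; apply: ord_inj; move: hi hj; rewrite !ltnS !leqn0.
  by move=> /eqP -> /eqP ->.
rewrite (bigD1 (Ordinal hn)) //= big1 ?addr0 ?oner_eq0 // => j /andP [hj hne].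
exfalso; move: hne; rewrite ltnS leqn0 in hj; apply/negP; rewrite negbK.
by apply/eqP/val_inj; rewrite /= (eqP hj).
Qed.

Lemma step m (hm : (0 < m)%N) (hmn : (m < n)%N) (v : 'I_n -> R) :
  Inv m v -> exists v', Inv m.+1 v'.
Proof.
case=> Hg Hd Hs.
pose im := Ordinal hmn.
have him : val im = m by [].
have hn0 : (0 < n)%N := leq_ltn_trans (leq0n m) hmn.
pose i0 := Ordinal hn0.
have hi0 : (i0 < m.+1)%N by [].
pose cond := fun T : {set {perm 'I_n}} => (T \subset FixS n m.+1) && (m`! < #|T|)%N.
pose Ap := fun T => Amat m.+1 i0 (Vp v im) T.
have hNn : (0 < N + n)%N by rewrite addn_gt0 hn0 orbT.
have [f hf] : exists f : {set {perm 'I_n}} -> 'I_n -> 'I_(N + n),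
    forall T, cond T -> \det (colsub (f T) (Ap T)) != 0.
  apply: (@fin_all_exists _ (fun _ => 'I_n -> 'I_(N + n))
     (fun T g => cond T -> \det (colsub g (Ap T)) != 0)) => T.
  case: (boolP (cond T)) => [/andP [HT hT]|hc].
    have [g hg] := @formal_minor R n m hm hmn im him v Hg T HT hT i0 hi0.
    by exists g.
  by exists (fun _ => Ordinal hNn).
pose S := \sum_(k : 'I_n | (k < m)%N) v k.
pose Q := (\prod_(T : {set {perm 'I_n}}) (if cond T then \det (colsub (f T) (Ap T)) else 1))
   * \prod_(k : 'I_n | (k < m)%N) ('X - (v k)%:P) * ('X - (- S)%:P).
have hQ : Q != 0.
  rewrite !mulf_neq0 ?polyXsubC_eq0 //.
    apply/prodf_neq0 => T _; case: ifP => hc; first exact: hf.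
    exact: oner_neq0.
  by apply/prodf_neq0 => k _; rewrite polyXsubC_eq0.
have [t ht] := poly_nonroot hQ.
move: ht; rewrite !hornerM !horner_prod hornerXsubC opprK => ht.
have ht3 : t + S != 0.
  by move: ht; rewrite !mulf_eq0 !negb_or => /andP [_ ->].
have ht1 : forall T, cond T -> (\det (colsub (f T) (Ap T))).[t] != 0.
  move=> T hc; move: ht; rewrite !mulf_eq0 !negb_or => /andP [/andP [h _] _].
  by move/prodf_neq0: h => /(_ T isT); rewrite hc.
have ht2 : forall k : 'I_n, (k < m)%N -> t != v k.
  move=> k hk; move: ht; rewrite !mulf_eq0 !negb_or => /andP [/andP [_ h] _].
  by move/prodf_neq0: h => /(_ k hk); rewrite hornerXsubC subr_eq0.
pose v' := fun k : 'I_n => if k == im then t else v k.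
have ltm : forall k : 'I_n, (k < m.+1)%N -> k != im -> (k < m)%N.
  move=> k hk hne; rewrite ltn_neqAle -ltnS hk andbT; apply: contra hne => /eqP e.
  by apply/eqP/val_inj.
have ltm' : forall k : 'I_n, (k < m)%N -> k != im.
  by move=> k hk; apply/eqP => e; move: hk; rewrite e ltnn.
have sumv' : \sum_(k : 'I_n | (k < m.+1)%N) v' k = t + S.
  rewrite (bigD1 im) //= /v' eqxx; congr (_ + _).
  apply: eq_big => k.
    apply/andP/idP => [[hk hne]|hk]; first exact: ltm.
    by split; [apply: ltnW | apply: ltm'].
  by case/andP => _ /negbTE ->.
exists v'; split; last first.
- by rewrite sumv'.
- move=> i j hi hj; rewrite /v'.
  case: (eqVneq i im) => [ei|nei]; case: (eqVneq j im) => [ej|nej].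
  + by rewrite ei ej.
  + by move=> e; move: (ht2 j (ltm j hj nej)); rewrite e eqxx.
  + by move=> e; move: (ht2 i (ltm i hi nei)); rewrite e eqxx.
  + by apply: Hd; apply: ltm.
move=> b c [i [j [hi hj hbij]]].
rewrite /= leqNgt; apply/negP => hZ.
set Z := [set s in FixS n m.+1 | lsum m.+1 b v' s == c] in hZ.
have HZ : Z \subset FixS n m.+1 by apply/subsetP => s; rewrite inE => /andP [].
have hc : cond Z by rewrite /cond HZ hZ.
pose Ar := Amat m.+1 i0 v' Z.
have eA : map_mx (horner_eval t) (Ap Z) = Ar.
  apply/matrixP => x r; rewrite !mxE.
  case: (split r) => [r1|r2] /=.
    case: ifP => _; last by rewrite horner_evalE horner0.
    case: ifP => _; first by rewrite horner_evalE hornerN hornerC.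
    case: ifP => _; last by rewrite horner_evalE horner0.
    rewrite horner_evalE /Vp /v'; case: ifP => _; first by rewrite hornerX.
    by rewrite hornerC.
  by case: ifP => _; rewrite horner_evalE hornerC.
have hdet : \det (colsub (f Z) Ar) != 0.
  rewrite -eA.
  have -> : colsub (f Z) (map_mx (horner_eval t) (Ap Z)) =
            map_mx (horner_eval t) (colsub (f Z) (Ap Z)).
    by apply/matrixP => x y; rewrite !mxE.
  by rewrite det_map_mx; exact: (ht1 Z hc).
pose w : 'rV[R]_n := \row_j (if j == i0 then c - b i0 * \sum_(k : 'I_n | (k < m.+1)%N) v' k
                            else if (j < m.+1)%N then b j - b i0 else 0).
have wA : w *m Ar == 0.
  rewrite Amat_ker //; apply/andP; split.
    apply/forallP => x; apply/implyP => hx; rewrite mxE.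
    have -> : (x == i0) = false.
      by apply/negbTE; apply/eqP => e; move: hx; rewrite e leqNgt hi0.
    by rewrite ltnNge hx.
  apply/forallP => s; apply/implyP => sZ.
  move: sZ; rewrite inE => /andP [sF /eqP hl].
  apply/eqP; rewrite [RHS]mxE eqxx.
  transitivity (\sum_(x : 'I_n | (x < m.+1)%N) (b x * v' (s x) - b i0 * v' (s x))).
    apply: eq_bigr => x hx; rewrite -mulrBl mxE; congr (_ * _).
    case: (eqVneq x i0) => [->|hne]; first by rewrite subrr.
    by rewrite hx.
  by rewrite sumrB -mulr_sumr (reindex_Fix (fun k => v' k) sF) -/(lsum _ _ _ _) hl.
have wnz : w != 0.
  have [x [hx bx]] : exists x : 'I_n, (x < m.+1)%N /\ b x != b i0.
    case: (eqVneq (b i) (b i0)) => h; last by exists i.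
    by exists j; split => //; rewrite -h eq_sym.
  apply/negP => /eqP w0; move/matrixP: w0 => /(_ 0 x); rewrite !mxE.
  have -> : (x == i0) = false by apply/negbTE; apply: contra bx => /eqP ->.
  by rewrite hx => /eqP; rewrite subr_eq0 (negbTE bx).
move/negP: hdet; apply; apply/det0P; exists w => //.
by rewrite colsub_mul (eqP wA); apply/matrixP => x y; rewrite !mxE.
Qed.

End Step.

Lemma exists_inv (R : realType) n k : (0 < k <= n)%N -> exists v : 'I_n -> R, Inv k v.
Proof.
elim: k => // k IH /andP [_ hk].
case: (posnP k) hk => [->|kp] hk; first exact: Inv1.
have hk' : (0 < k <= n)%N by rewrite kp ltnW.
have [v hv] := IH hk'.
exact: (@step R n k kp hk v hv).
Qed.


Section Gram.
Variable R : realType.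
Variable n : nat.

Definition Gr (T : {set {perm 'I_n}}) (v : 'I_n -> R) : 'M[R]_n :=
  \matrix_(i, j) \sum_(s in T) v (s i) * v (s j).

Lemma Gr_mul (T : {set {perm 'I_n}}) (v : 'I_n -> R) (a : 'rV[R]_n) j :
  (a *m Gr T v) 0 j = \sum_(s in T) (\sum_k a 0 k * v (s k)) * v (s j).
Proof.
rewrite mxE.
under eq_bigr => k _ do rewrite mxE mulr_sumr.
rewrite exchange_big /=; apply: eq_bigr => s _.
by rewrite mulr_suml; apply: eq_bigr => k _; rewrite mulrA.
Qed.

Lemma G1 (T : {set {perm 'I_n}}) (v : 'I_n -> R) (a : 'rV[R]_n) : a != 0 ->
  (forall s, s \in T -> \sum_j a 0 j * v (s j) = 0) -> \det (Gr T v) = 0.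
Proof.
move=> anz h; apply/eqP/det0P; exists a => //.
apply/matrixP => i j; rewrite [i]ord1 Gr_mul mxE big1 // => s sT.
by rewrite h // mul0r.
Qed.

Lemma G2 (T : {set {perm 'I_n}}) (v : 'I_n -> R) : \det (Gr T v) = 0 ->
  exists2 a : 'rV[R]_n, a != 0 & forall s, s \in T -> \sum_j a 0 j * v (s j) = 0.
Proof.
move/eqP/det0P => [a anz aG]; exists a => // s sT.
have : \sum_j (a *m Gr T v) 0 j * a 0 j = 0.
  by rewrite aG big1 // => j _; rewrite mxE mul0r.
under eq_bigr => j _ do rewrite Gr_mul mulr_suml.
rewrite exchange_big /=.
rewrite (eq_bigr (fun s' : {perm 'I_n} => (\sum_k a 0 k * v (s' k)) ^+ 2)); last first.
  move=> s' _; rewrite expr2 mulr_sumr; apply: eq_bigr => i _.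
  by rewrite -mulrA [v _ * _]mulrC.
move/eqP; rewrite psumr_eq0 => [/allP h|s' _]; last exact: sqr_ge0.
have := h s; rewrite mem_index_enum sT /= => /(_ isT).
by rewrite sqrf_eq0 => /eqP.
Qed.

End Gram.

Section Poly.
Variable R : realType.
Variable n : nat.

Definition GP (T : {set {perm 'I_n}}) : 'M[{mpoly R[n]}]_n :=
  \matrix_(i, j) \sum_(s in T) 'X_(s i) * 'X_(s j).

Definition Pm : {mpoly R[n]} :=
  (\sum_i 'X_i) * (\prod_(i : 'I_n) \prod_(j : 'I_n | (i < j)%N) ('X_i - 'X_j))
  * \prod_(T : {set {perm 'I_n}} | ((n.-1)`! < #|T|)%N) \det (GP T).

Lemma Pm_eval (v : 'I_n -> R) : Pm.@[v] =
  (\sum_i v i) * (\prod_(i : 'I_n) \prod_(j : 'I_n | (i < j)%N) (v i - v j))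
  * \prod_(T : {set {perm 'I_n}} | ((n.-1)`! < #|T|)%N) \det (Gr T v).
Proof.
rewrite /Pm !mevalM rmorph_sum rmorph_prod /=.
congr (_ * _ * _).
- by apply: eq_bigr => i _; rewrite mevalXU.
- apply: eq_bigr => i _; rewrite rmorph_prod; apply: eq_bigr => j _.
  by rewrite rmorphB /= !mevalXU.
- rewrite rmorph_prod; apply: eq_bigr => T _.
  rewrite -det_map_mx; congr (\det _); apply/matrixP => i j; rewrite !mxE.
  rewrite rmorph_sum; apply: eq_bigr => s _.
  by rewrite rmorphM /= !mevalXU.
Qed.

End Poly.

Lemma size_filter_enum (T : finType) (P : pred T) : size (filter P (enum T)) = #|P|.
Proof. by rewrite cardE enumT. Qed.

Lemma orbit_filter_size (R : realType) n (a v : {ffun 'I_n -> R}) :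
  size [seq w <- orbit_seq v | in_hyperplane a w] =
  #|[pred s : {perm 'I_n} | in_hyperplane a (permv s v)]|.
Proof. by rewrite /orbit_seq /image_mem filter_map size_map size_filter_enum. Qed.

Lemma in_hyp_perm (R : realType) n (a v : {ffun 'I_n -> R}) s :
  in_hyperplane a (permv s v) = (\sum_j a j * v (s j) == 0).
Proof. by rewrite /in_hyperplane; congr (_ == 0); apply: eq_bigr => j _; rewrite ffunE. Qed.

End Aux.
Import Aux.

Theorem proposition1p6 (R : realType) (n : nat) (hn : (2 <= n)%N) :
  exists U : {ffun 'I_n -> R} -> Prop,
    zariski_open U /\ (exists v, U v) /\
    forall v, U v ->
      (exists a : {ffun 'I_n -> R}, a != 0 /\ hyp_orbit_card a v = (n.-1)`!) /\
      (forall a : {ffun 'I_n -> R}, a != 0 -> (hyp_orbit_card a v <= (n.-1)`!)%N).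
Proof.
have hn0 : (0 < n)%N := leq_trans (isT : (1 <= 2)%N) hn.
have [v0 [Hg0 Hd0 Hs0]] : exists v : 'I_n -> R, Inv n v.
  by apply: exists_inv; rewrite hn0 leqnn.
have fulls : forall F : 'I_n -> R, \sum_(i : 'I_n | (i < n)%N) F i = \sum_i F i.
  by move=> F; apply: eq_bigl => i; rewrite ltn_ord.
pose U := fun v : {ffun 'I_n -> R} => (Pm R n).@[v] != 0.
exists U; split; [|split].
- exists (fun p => p = Pm R n) => v; split => [h|[p [-> h]]] //.
  by exists (Pm R n).
- exists [ffun i => v0 i]; rewrite /U (@meval_eq _ _ _ v0); last by move=> i; rewrite ffunE.
  rewrite Pm_eval !mulf_neq0 //.
  + by rewrite -fulls.
  + apply/prodf_neq0 => i _; apply/prodf_neq0 => j hij; rewrite subr_eq0.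
    apply/eqP => e; have eij := Hd0 i j (ltn_ord i) (ltn_ord j) e.
    by rewrite eij ltnn in hij.
  + apply/prodf_neq0 => T hT; apply/eqP => hdet.
    have [a anz ha] := G2 hdet.
    have [s sT] : exists s, s \in T.
      by apply/card_gt0P; apply: leq_ltn_trans hT.
    case: (boolP [forall i, forall j, a 0 i == a 0 j]) => [/forallP hc|hnc].
      have ea : forall j, a 0 j = a 0 (Ordinal hn0).
        by move=> j; move: (hc j) => /forallP /(_ (Ordinal hn0)) /eqP.
      have a0 : a 0 (Ordinal hn0) != 0.
        apply: contra anz => /eqP h; apply/eqP/matrixP => i j.
        by rewrite [i]ord1 mxE ea h.
      move: (ha s sT); under eq_bigr => j _ do rewrite ea.
      rewrite -mulr_sumr -fulls (reindex_Fix _ (FixS_all s)) => /eqP.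
      by rewrite mulf_eq0 (negbTE a0) (negbTE Hs0).
    have nc : nonconst n (fun j => a 0 j).
      move: hnc; rewrite negb_forall => /existsP [i]; rewrite negb_forall => /existsP [j hij].
      by exists i, j; split.
    have := Hg0 (fun j => a 0 j) 0 nc.
    rewrite leqNgt; move/negP; apply; apply: (leq_trans hT); apply: subset_leq_card.
    apply/subsetP => s' s'T; rewrite inE FixS_all /= /lsum fulls.
    by rewrite (ha s' s'T).
move=> v; rewrite /U Pm_eval !mulf_eq0 !negb_or => /andP [/andP [hS hV] hD].
have hd : forall i j, v i = v j -> i = j.
  move=> i j e; case: (ltngtP i j) => h.
  - move/prodf_neq0: hV => /(_ i isT) /prodf_neq0 /(_ j h).
    by rewrite e subrr eqxx.
  - move/prodf_neq0: hV => /(_ j isT) /prodf_neq0 /(_ i h).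
    by rewrite e subrr eqxx.
  - exact: val_inj.
have hdet : forall T : {set {perm 'I_n}}, ((n.-1)`! < #|T|)%N -> \det (Gr T v) != 0.
  by move=> T hT; move/prodf_neq0: hD; apply.
have pinj : injective (fun s : {perm 'I_n} => permv s v).
  move=> s s' /ffunP e; apply/permP => i; apply: hd.
  by move: (e i); rewrite !ffunE.
split.
  have hl : (n.-1 < n)%N by rewrite ltn_predL.
  pose lst := Ordinal hl.
  pose S := \sum_i v i.
  pose a : {ffun 'I_n -> R} := [ffun j => (j == lst)%:R - v lst / S].
  exists a; split.
    apply/eqP => /ffunP a0.
    have i0l : (Ordinal hn0 == lst) = false.
      apply/negbTE; apply/eqP => /(congr1 val) /= h.
      by move: hn h; case: (n) => [|[|k]].
    move: (a0 (Ordinal hn0)); rewrite !ffunE i0l sub0r => /eqP; rewrite oppr_eq0 => /eqP x0.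
    by move: (a0 lst); rewrite !ffunE eqxx x0 subr0 => /eqP; rewrite oner_eq0.
  rewrite /hyp_orbit_card undup_id; last first.
    by rewrite /orbit_seq /image_mem filter_map map_inj_uniq // filter_uniq // enum_uniq.
  rewrite orbit_filter_size -(card_FixS (leq_pred n)).
  rewrite -[RHS]cardsE; apply: eq_card => s; rewrite inE /= in_hyp_perm.
  have -> : \sum_j a j * v (s j) = v (s lst) - v lst.
    under eq_bigr => j _ do rewrite ffunE mulrBl.
    rewrite sumrB -mulr_sumr -(fulls (fun i => v (s i))) (reindex_Fix v (FixS_all s)) (fulls v) -/S.
    rewrite mulfVK //; congr (_ - _).
    rewrite (bigD1 lst) //= eqxx mul1r big1 ?addr0 // => j hj.
    by rewrite (negbTE hj) mul0r.
  rewrite subr_eq0; apply/eqP/idP => [h|].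
    rewrite inE; apply: FixS_intro => x hx.
    have -> : x = lst by apply/val_inj; rewrite /=; apply/eqP; rewrite eqn_leq hx -ltnS (ltn_predK hn0) ltn_ord.
    exact: hd.
  by rewrite inE => hs; rewrite (FixS_out hs) //.
move=> a anz.
apply: leq_trans (size_undup _) _.
rewrite orbit_filter_size leqNgt; apply/negP => hZ.
rewrite -cardsE in hZ; move: (hdet _ hZ); apply/negP; rewrite negbK; apply/eqP.
apply: (@G1 R n _ v (\row_j a j)).
  apply: contra anz => /eqP /matrixP h; apply/eqP/ffunP => j.
  by move: (h 0 j); rewrite !mxE ffunE.
move=> s; rewrite !inE /in_hyperplane => /eqP h; rewrite -[RHS]h.
by apply: eq_bigr => j _; rewrite !mxE ffunE.
Qed.
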